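(* Let $X$ be a real Banach space and $\alpha>0$; put $X_\alpha=X\setminus\alpha B_X$. The following statements are equivalent. (1) $X$ is UR. (2) $r(Q_{S_X}(x,\frac1n),Q_{S_X}(x',\frac1n))\to\left\|\frac{x}{\|x\|}-\frac{x'}{\|x'\|}\right\|$ uniformly on $X_\alpha\times X_\alpha$, i.e. $\sup_{x,x'\in X_\alpha}\left|r(Q_{S_X}(x,\frac1n),Q_{S_X}(x',\frac1n))-\left\|\frac{x}{\|x\|}-\frac{x'}{\|x'\|}\right\|\right|\to0$. (3) $\sup_{x\in X_\alpha}\mathrm{diam}(Q_{S_X}(x,\frac1n))\to0$. (4) $Q_{S_X}(x)=\{-\frac{x}{\|x\|}\}$ for every $x\in X_\alpha$ and $\sup_{x\in X_\alpha}H(Q_{S_X}(x,\frac1n),Q_{S_X}(x))\to0$. (5) $S_X$ is USUR on $X_\alpha$.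
   Context: $B_X,S_X$ are the closed unit ball and unit sphere of $X$. For non-empty bounded $F$, $x\in X$, $\delta\ge0$: $r(F,x)=\sup_{y\in F}\|x-y\|$, $Q_F(x,\delta)=\{y\in F:\|x-y\|\ge r(F,x)-\delta\}$, $Q_F(x)=Q_F(x,0)$. $F$ is USUR (uniformly strongly uniquely remotal) on $A$ if $Q_F(x)$ is a singleton for every $x\in A$ and for every $\epsilon>0$ there is $\delta>0$ such that $Q_F(x,\delta)\subseteq Q_F(x)+\epsilon B_X$ for every $x\in A$. For non-empty bounded $A,B$: $r(A,B)=\sup\{\|a-b\|:a\in A,b\in B\}$ and $H(A,B)=\inf\{r>0:A\subseteq B+rB_X, B\subseteq A+rB_X\}$ (Hausdorff distance). $X$ is UR if $\|x_n-y_n\|\to0$ whenever $(x_n),(y_n)\subseteq S_X$ with $\|\frac{x_n+y_n}{2}\|\to1$. *)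

(* Defs.v *)
From HB Require Import structures.
From mathcomp Require Import all_boot all_order all_algebra.
From mathcomp Require Import all_classical all_reals all_analysis.
Set Implicit Arguments. Unset Strict Implicit. Unset Printing Implicit Defensive.
Import Order.TTheory GRing.Theory Num.Theory.
Import numFieldNormedType.Exports.
Local Open Scope classical_set_scope.
Local Open Scope ring_scope.

Section Remotal.
Variables (R : realType) (X : normedModType R).

Definition unit_ball : set X := [set x | `|x| <= 1].
Definition unit_sphere : set X := [set x | `|x| = 1].

(* A + r B_X, written out: points at distance <= r from A *)
Definition enlarge (A : set X) (r : R) : set X :=
  [set z | exists2 a, A a & exists2 u, unit_ball u & z = a + r *: u].

Definition rad (F : set X) (x : X) : R := sup [set `|x - y| | y in F].

Definition Qset (F : set X) (x : X) (delta : R) : set X :=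
  [set y | F y /\ rad F x - delta <= `|x - y|].

Definition Q0 (F : set X) (x : X) : set X := Qset F x 0.

Definition rad2 (A B : set X) : R :=
  sup [set r | exists a b, [/\ A a, B b & r = `|a - b|]].

Definition diamX (A : set X) : R :=
  sup [set r | exists a b, [/\ A a, A b & r = `|a - b|]].

Definition hausdorff (A B : set X) : R :=
  inf [set r | 0 < r /\ A `<=` enlarge B r /\ B `<=` enlarge A r].

Definition USUR (F A : set X) : Prop :=
  (forall x, A x -> exists y, Q0 F x = [set y]) /\
  (forall eps, 0 < eps -> exists2 delta, 0 < delta &
     forall x, A x -> Qset F x delta `<=` enlarge (Q0 F x) eps).

Definition UR : Prop :=
  forall xn yn : nat -> X,
    (forall n, unit_sphere (xn n)) -> (forall n, unit_sphere (yn n)) ->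
    (fun n => `|(2%:R^-1 : R) *: (xn n + yn n)|) @ \oo --> (1 : R) ->
    (fun n => `|xn n - yn n|) @ \oo --> (0 : R).

Definition Xout (alpha : R) : set X := [set x | ~ (`|x| <= alpha)].

Definition normalize (x : X) : X := `|x|^-1 *: x.

End Remotal.

(* Main.v *)
Require Import Defs.
From HB Require Import structures.
From mathcomp Require Import all_boot all_order all_algebra.
From mathcomp Require Import all_classical all_reals all_analysis.
From mathcomp Require Import ring lra.
Import Order.TTheory GRing.Theory Num.Theory.
Import numFieldNormedType.Exports.
Local Open Scope classical_set_scope.
Local Open Scope ring_scope.
Set Implicit Arguments. Unset Strict Implicit.

Section RealHelp.
Variable R : realType.

Lemma seq0P (s : nat -> R) :
  s @ \oo --> (0:R) <-> forall eps, 0 < eps -> exists N, forall n, (N <= n)%N -> `|s n| <= eps.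
Proof.
rewrite cvgr0Pnorm_le; split=> h e he.
  by have [N _ hN] := h e he; exists N => n hn; apply: hN.
by have [N hN] := h e he; exists N => // n hn; apply: hN.
Qed.

Lemma sup_bnd (E : set R) (M : R) : 0 <= M -> (forall e, E e -> 0 <= e <= M) ->
  0 <= sup E <= M.
Proof.
move=> M0 hE.
have [[e Ee]|E0] := pselect (exists e, E e); last first.
  have -> : E = set0 by apply/seteqP; split=> x // Ex; apply: E0; exists x.
  by rewrite sup0 lexx.
have ub : ubound E M by move=> y /hE /andP[].
apply/andP; split; last by apply: ge_sup => //; exists e.
have /andP[e0 _] := hE e Ee.
by apply: (le_trans e0); apply: ub_le_sup => //; exists M.
Qed.

Lemma sup_ge (E : set R) (e M : R) : E e -> (forall e', E e' -> e' <= M) -> e <= sup E.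
Proof. by move=> Ee hM; apply: ub_le_sup => //; exists M. Qed.

Lemma inv_small (eps : R) : 0 < eps -> exists N, forall n, (N <= n)%N -> n.+1%:R^-1 <= eps.
Proof.
move=> he; exists (Num.truncn (eps^-1)) => n hn.
have h1 := Num.Theory.truncnS_gt (eps^-1).
have h2 : (Num.truncn eps^-1).+1%:R <= n.+1%:R :> R by rewrite ler_nat ltnS.
rewrite -[eps]invrK lef_pV2 ?posrE ?invr_gt0 //; apply: ltW.
exact: lt_le_trans h1 h2.
Qed.

Lemma small0 (a : R) : (forall e, 0 < e -> a <= e) -> a <= 0.
Proof.
move=> h; rewrite leNgt; apply/negP => a0.
have := h (a / 2%:R); rewrite divr_gt0 // => /(_ isT). lra.
Qed.

Lemma cvg_le_intro (s : nat -> R) (l : R) :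
  (forall eps : R, 0 < eps -> exists N, forall n, (N <= n)%N -> `|l - s n| <= eps) ->
  s @ \oo --> l.
Proof. by move=> h; apply/cvgrPdist_le => e he; have [N hN] := h e he; exists N. Qed.

End RealHelp.

Section Geo.
Variables (R : realType) (X : normedModType R).
Local Notation SX := (@unit_sphere R X).

Lemma norm_normalize (x : X) : x != 0 -> `|normalize x| = 1.
Proof. by move=> x0; rewrite /normalize normfZV. Qed.

Lemma normalize_S (x : X) : x != 0 -> SX (- normalize x).
Proof. by move=> x0; rewrite /unit_sphere /= normrN norm_normalize. Qed.

Lemma rad_S (x : X) : x != 0 -> Defs.rad SX x = `|x| + 1.
Proof.
move=> x0; have nx : `|x| != 0 by rewrite normr_eq0.
have el : [set `|x - y| | y in SX] (`|x| + 1).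
  exists (- normalize x); first exact: normalize_S.
  rewrite opprK /normalize -{1}[x]scale1r -scalerDl normrZ.
  rewrite ger0_norm ?addr_ge0 ?invr_ge0 // mulrDl mul1r mulVf //.
apply/le_anti/andP; split; last by apply: sup_ge el _ => _ [y Sy <-];
  rewrite (le_trans (ler_normB _ _)) // Sy.
by apply: ge_sup; [exists (`|x| + 1) | move=> _ [y Sy <-];
  rewrite (le_trans (ler_normB _ _)) // Sy].
Qed.

Lemma norm_add_normalize (x : X) : x != 0 -> `|x + normalize x| = `|x| + 1.
Proof.
move=> x0; have nx : `|x| != 0 by rewrite normr_eq0.
rewrite /normalize -{1}[x]scale1r -scalerDl normrZ.
by rewrite ger0_norm ?addr_ge0 ?invr_ge0 // mulrDl mul1r mulVf.
Qed.

Lemma In_Q (x : X) (d : R) : x != 0 -> 0 <= d -> Qset SX x d (- normalize x).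
Proof.
move=> x0 d0; split; first exact: normalize_S.
by rewrite rad_S // opprK norm_add_normalize // lerBlDr lerDl.
Qed.

Lemma Qmono (F : set X) x (d1 d2 : R) : d1 <= d2 -> Qset F x d1 `<=` Qset F x d2.
Proof.
move=> d12 y [Fy h]; split=> //; apply: le_trans h; lra.
Qed.

Lemma scale_normalize (x : X) : x = `|x| *: normalize x.
Proof.
have [->|x0] := eqVneq x 0; first by rewrite normr0 scale0r.
by rewrite /normalize scalerA mulfV ?normr_eq0 // scale1r.
Qed.

Lemma keyA (alpha : R) (x y : X) (d : R) : 0 < alpha -> alpha < `|x| -> 0 <= d ->
  Qset SX x d y -> 2 - d * (1 + alpha^-1) <= `|normalize x - y|.
Proof.
move=> a0 ax d0 [Sy h].
have x0 : x != 0 by rewrite -normr_eq0 gt_eqF // (lt_trans a0 ax).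
move: h; rewrite rad_S //.
have nu := norm_normalize x0; move: Sy; rewrite /unit_sphere /= => ny.
rewrite [X in `|X - y|]scale_normalize.
move: nu ax; set u := normalize x; set t := `|x|; clearbody u t => nu ax h.
have ia : alpha * alpha^-1 = 1 by rewrite mulfV ?gt_eqF.
have ia0 : 0 < alpha^-1 by rewrite invr_gt0.
have hd : d <= d * (1 + alpha^-1) by rewrite ler_peMr //; lra.
have [t1|t1] := lerP 1 t.
  have : `|t *: u - y| <= t - 1 + `|u - y|.
    have -> : t *: u - y = (t - 1) *: u + (u - y).
      by rewrite scalerBl scale1r addrA subrK.
    by rewrite (le_trans (ler_normD _ _)) // normrZ nu mulr1 ger0_norm ?subr_ge0.
  lra.
have : `|t *: u - y| <= t * `|u - y| + (1 - t).
  have -> : t *: u - y = t *: (u - y) + (1 - t) *: (- y).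
    by rewrite scalerBr scalerBl scale1r scalerN opprK [- y + _]addrC addrA subrK.
  rewrite (le_trans (ler_normD _ _)) // !normrZ normrN ny mulr1.
  rewrite [`|1 - t|]ger0_norm ?subr_ge0 ?(ltW t1) // ger0_norm //; apply: ltW; apply: lt_trans a0 ax.
have tpos : 0 < t by apply: lt_trans a0 ax.
have ta : 1 <= t * alpha^-1.
  by rewrite -ia ler_pM2r // ltW.
move=> h2.
have h3 : 0 <= t * (`|u - y| - 2 + d * (1 + alpha^-1)).
  have : 0 <= d * (t * alpha^-1 - 1) by apply: mulr_ge0 => //; lra.
  have : 0 <= t * d by apply: mulr_ge0 => //; lra.
  move=> q1 q2; have -> : t * (`|u - y| - 2 + d * (1 + alpha^-1)) = t * `|u - y| - 2 * t + t * d + d * (t * alpha^-1 - 1) + d by ring.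
  lra.
move: h3; rewrite pmulr_rge0 //; lra.
Qed.

Lemma keyB (alpha : R) (u v : X) (d : R) : 0 < alpha -> SX u -> SX v -> 0 <= d ->
  2 - d / (alpha + 1) <= `|u + v| ->
  [/\ Xout alpha ((alpha + 1) *: u), normalize ((alpha + 1) *: u) = u,
      Qset SX ((alpha + 1) *: u) d (- v) & Qset SX ((alpha + 1) *: u) d (- u)].
Proof.
rewrite /unit_sphere /= => a0 nu nv d0 h.
have t0 : 0 < alpha + 1 by lra.
have nt : `|(alpha + 1) *: u| = alpha + 1 by rewrite normrZ nu mulr1 gtr0_norm.
have x0 : (alpha + 1) *: u != 0 by rewrite -normr_eq0 nt gt_eqF.
have nx : normalize ((alpha + 1) *: u) = u.
  by rewrite /normalize nt scalerA mulVf ?gt_eqF // scale1r.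
split=> //.
- by rewrite /Xout /= nt; lra.
- split; first by rewrite /unit_sphere /= normrN.
  rewrite rad_S // nt opprK.
  have e : (alpha + 1) *: (u + v) = ((alpha + 1) *: u + v) + alpha *: v.
    by rewrite scalerDr -addrA; congr (_ + _); rewrite scalerDl scale1r addrC.
  have := ler_normD ((alpha + 1) *: u + v) (alpha *: v).
  rewrite -e !normrZ nv mulr1 !gtr0_norm //.
  have : (alpha + 1) * (2 - d / (alpha + 1)) <= (alpha + 1) * `|u + v|.
    by rewrite ler_pM2l.
  rewrite mulrBr mulrCA mulfV ?gt_eqF // mulr1.
  lra.
- by rewrite -{2}nx; apply: In_Q.
Qed.
End Geo.

Section URm.
Variables (R : realType) (X : normedModType R).
Local Notation SX := (@unit_sphere R X).

Definition URmod := forall eps : R, 0 < eps -> exists2 eta : R, 0 < eta &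
  forall u v : X, SX u -> SX v -> 2 - eta <= `|u + v| -> `|u - v| <= eps.

Lemma URmod_UR : URmod -> UR X.
Proof.
move=> H xn yn Sx Sy /cvgrPdist_le hc; apply/seq0P => e e0.
have [eta eta0 Heta] := H e e0.
have [N _ hN] := hc (eta / 2) (divr_gt0 eta0 (ltr0Sn _ 1)).
exists N => n hn; rewrite normr_id; apply: Heta => //.
have := hN n hn; rewrite normrZ ger0_norm ?invr_ge0 //.
move=> h; have := ler_norm (1 - 2^-1 * `|xn n + yn n|); lra.
Qed.

Lemma UR_URmod : UR X -> URmod.
Proof.
move=> H e e0; apply: contrapT => Hn.
have hseq : forall n : nat, exists p : X * X, [/\ SX p.1, SX p.2,
    2 - n.+1%:R^-1 <= `|p.1 + p.2| & e < `|p.1 - p.2|].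
  move=> n; apply: contrapT => Hp; apply: Hn; exists n.+1%:R^-1 => // u v Su Sv h.
  rewrite leNgt; apply/negP => lt; apply: Hp; exists (u, v); by split.
have [f hf] := choice hseq.
have Sf1 : forall n, SX (f n).1 by move=> n; case: (hf n).
have Sf2 : forall n, SX (f n).2 by move=> n; case: (hf n).
have := H (fun n => (f n).1) (fun n => (f n).2) Sf1 Sf2.
have hc : (fun n => `|2^-1 *: ((f n).1 + (f n).2)|) @ \oo --> (1 : R).
  apply: cvg_le_intro => eps eps0.
  have [N hN] := @inv_small R eps eps0.
  exists N => n hn /=.
  have := hN n hn; case: (hf n) => s1 s2 h1 _.
  have h2 := ler_normD (f n).1 (f n).2; move: s1 s2; rewrite /unit_sphere /= => s1 s2.
  have ni : 0 <= n.+1%:R^-1 :> R by rewrite invr_ge0.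
  rewrite normrZ ger0_norm ?invr_ge0 //; move: ni h1; set k := n.+1%:R^-1; clearbody k => ni h1 hk.
  rewrite ger0_norm; lra.
move=> /(_ hc) /seq0P /(_ e e0) [N hN].
have := hN N (leqnn N); rewrite normr_id; case: (hf N) => _ _ _; lra.
Qed.

End URm.

Section Main.
Variables (R : realType) (X : normedModType R).
Local Notation SX := (@unit_sphere R X).

Lemma subDl (y p q : X) : (y + p) - (y + q) = p - q.
Proof. by rewrite opprD addrACA subrr add0r. Qed.

Lemma negdist (u v : X) : `|- v - - u| = `|u - v|.
Proof. by rewrite opprK addrC. Qed.

Lemma xa_gt (alpha : R) (x : X) : Xout alpha x -> alpha < `|x|.
Proof. by rewrite /Xout /= ltNge => /negP. Qed.

Lemma xa_neq0 (alpha : R) (x : X) : 0 < alpha -> Xout alpha x -> x != 0.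
Proof.
move=> a0 /xa_gt h; rewrite -normr_eq0 gt_eqF //; exact: lt_trans a0 h.
Qed.

Lemma dist_S (a b : X) : SX a -> SX b -> `|a - b| <= 2.
Proof.
rewrite /unit_sphere /= => na nb; apply: le_trans (ler_normB _ _) _; rewrite na nb; lra.
Qed.

Lemma KK (alpha : R) : 0 < alpha -> @URmod R X -> forall eps : R, 0 < eps ->
  exists2 d : R, 0 < d & forall x y, Xout alpha x -> Qset SX x d y ->
    `|y + normalize x| <= eps.
Proof.
move=> a0 Hm e e0; have [eta eta0 H] := Hm e e0.
have c0 : 0 < 1 + alpha^-1 by rewrite ltr_pwDl // invr_ge0 ltW.
exists (eta / (1 + alpha^-1)) => [|x y xa hQ]; first by rewrite divr_gt0.
have := keyA a0 (xa_gt xa) (ltW (divr_gt0 eta0 c0)) hQ.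
rewrite mulfVK ?gt_eqF // => h.
have x0 := xa_neq0 a0 xa.
have := H (normalize x) (- y) _ _ h.
rewrite opprK addrC; apply.
  by rewrite /unit_sphere /= norm_normalize.
by case: hQ; rewrite /unit_sphere /= normrN.
Qed.

Lemma Q0eq (alpha : R) x : 0 < alpha -> @URmod R X -> Xout alpha x ->
  Q0 SX x = [set - normalize x].
Proof.
move=> a0 Hm xa; have x0 := xa_neq0 a0 xa.
apply/seteqP; split=> y /=; last by move=> ->; apply: In_Q.
move=> hy; apply/eqP; rewrite -addr_eq0 -normr_le0; apply: small0 => e e0.
have [d d0 hd] := KK a0 Hm e0.
by apply: hd xa _; apply: Qmono hy; apply: ltW.
Qed.

Lemma enl1 (z y : X) (e : R) : 0 < e -> `|y - z| <= e -> enlarge [set z] e y.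
Proof.
move=> e0 h; exists z => //; exists (e^-1 *: (y - z)).
  rewrite /unit_ball /= normrZ ger0_norm ?invr_ge0 ?(ltW e0) // mulrC.
  by rewrite ler_pdivrMr // mul1r.
by rewrite scalerA mulfV ?gt_eqF // scale1r addrC subrK.
Qed.

Lemma enl_inv (z y : X) (e : R) : 0 <= e -> enlarge [set z] e y -> `|y - z| <= e.
Proof.
move=> e0 [a -> [w hw ->]]; rewrite addrC addKr normrZ ger0_norm //.
by rewrite -[leRHS]mulr1 ler_wpM2l.
Qed.

Lemma rad2_bnd (A B : set X) : A `<=` SX -> B `<=` SX -> 0 <= rad2 A B <= 2.
Proof.
move=> hA hB; apply: sup_bnd => // r [a [b [Aa Bb ->]]].
by rewrite normr_ge0 dist_S //; [apply: hA | apply: hB].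
Qed.

Lemma diam_bnd (A : set X) : A `<=` SX -> 0 <= diamX A <= 2.
Proof.
move=> hA; apply: sup_bnd => // r [a [b [Aa Bb ->]]].
by rewrite normr_ge0 dist_S //; apply: hA.
Qed.

Lemma Qsub (x : X) d : Qset SX x d `<=` SX.
Proof. by move=> y []. Qed.

Lemma haus_in2 (A : set X) z : A `<=` SX -> A z ->
  [set r | 0 < r /\ A `<=` enlarge [set z] r /\ [set z] `<=` enlarge A r] 2.
Proof.
move=> hA Az; split=> //; split.
  move=> y Ay; apply: enl1 => //; apply: dist_S; [exact: hA | exact: hA].
move=> y ->; exists z => //; exists 0; first by rewrite /unit_ball /= normr0.
by rewrite scaler0 addr0.
Qed.

Lemma haus_bnd (A : set X) z : A `<=` SX -> A z -> 0 <= hausdorff A [set z] <= 2.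
Proof.
move=> hA Az; have h2 := haus_in2 hA Az.
have lb : lbound [set r | 0 < r /\ A `<=` enlarge [set z] r /\ [set z] `<=` enlarge A r] 0.
  by move=> r [r0 _]; apply: ltW.
apply/andP; split; first by apply: lb_le_inf => //; exists 2.
by apply: ge_inf => //; exists 0.
Qed.

End Main.

Section Fwd.
Variables (R : realType) (X : normedModType R).
Local Notation SX := (@unit_sphere R X).

Lemma KKn (alpha : R) : 0 < alpha -> @URmod R X -> forall eps : R, 0 < eps ->
  exists N, forall n, (N <= n)%N -> forall x y, Xout alpha x ->
    Qset SX x n.+1%:R^-1 y -> `|y + normalize x| <= eps.
Proof.
move=> a0 Hm e e0; have [d d0 hd] := KK a0 Hm e0.
have [N hN] := inv_small d0; exists N => n hn x y xa hy.
by apply: hd xa _; apply: (Qmono (hN n hn)) hy.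
Qed.

Lemma L12 (alpha : R) : 0 < alpha -> @URmod R X ->
 (fun n : nat => sup [set r | exists x x', [/\ Xout alpha x, Xout alpha x' &
     r = `| rad2 (Qset SX x (n.+1%:R^-1)) (Qset SX x' (n.+1%:R^-1))
            - `|normalize x - normalize x'| | ]]) @ \oo --> (0 : R).
Proof.
move=> a0 Hm; apply/seq0P => e e0.
have [N hN] := KKn a0 Hm (divr_gt0 e0 (ltr0Sn _ 1)).
exists N => n hn.
suff /andP[s0 s1] : 0 <= sup [set r | exists x x', [/\ Xout alpha x, Xout alpha x' &
     r = `| rad2 (Qset SX x (n.+1%:R^-1)) (Qset SX x' (n.+1%:R^-1))
            - `|normalize x - normalize x'| | ]] <= e by rewrite ger0_norm.
apply: sup_bnd; first exact: ltW.
move=> r [x [x' [xa xa' ->]]].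
have x0 := xa_neq0 a0 xa; have x0' := xa_neq0 a0 xa'.
have h1 := hN n hn x _ xa; have h2 := hN n hn x' _ xa'.
move: h1 h2.
set A := Qset SX x n.+1%:R^-1; set B := Qset SX x' n.+1%:R^-1.
have uA : A (- normalize x) by apply: In_Q.
have uB : B (- normalize x') by apply: In_Q.
move: uA uB.
set u := normalize x; set u' := normalize x' => uA uB h1 h2.
have lo : `|u - u'| <= rad2 A B.
  apply: (@sup_ge _ _ _ 2); first by exists (-u), (-u'); rewrite negdist distrC.
  by move=> r' [a [b [Aa Bb ->]]]; apply: dist_S; [exact: Qsub Aa | exact: Qsub Bb].
have hi : rad2 A B <= `|u - u'| + e.
  have /andP[] // : 0 <= rad2 A B <= `|u - u'| + e.
  rewrite /rad2; apply: sup_bnd; first by rewrite addr_ge0 // ltW.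
  move=> r' [a [b [Aa Bb ->]]]; rewrite normr_ge0 /=.
  have := ler_distD (- u) a b; have := ler_distD (- u') (- u) b.
  rewrite negdist (distrC u') (distrC (- u) b) (distrC (- u') b) !opprK.
  have := h1 a Aa; have := h2 b Bb; lra.
rewrite normr_ge0 /= ger0_norm ?subr_ge0 //; lra.
Qed.


Lemma L13 (alpha : R) : 0 < alpha -> @URmod R X ->
  (fun n : nat => sup [set diamX (Qset SX x (n.+1%:R^-1)) | x in Xout alpha])
           @ \oo --> (0 : R).
Proof.
move=> a0 Hm; apply/seq0P => e e0.
have [N hN] := KKn a0 Hm (divr_gt0 e0 (ltr0Sn _ 1)).
exists N => n hn.
suff /andP[s0 s1] : 0 <= sup [set diamX (Qset SX x (n.+1%:R^-1)) | x in Xout alpha] <= e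
  by rewrite ger0_norm.
apply: sup_bnd; first exact: ltW.
move=> r [x xa <-]; rewrite /diamX; apply: sup_bnd; first exact: ltW.
move=> r' [a [b [Aa Bb ->]]]; rewrite normr_ge0 /=.
have := ler_distD (- normalize x) a b.
rewrite (distrC (- normalize x) b) !opprK.
have := hN n hn x a xa Aa; have := hN n hn x b xa Bb; lra.
Qed.

Lemma L14 (alpha : R) : 0 < alpha -> @URmod R X ->
  (forall x, Xout alpha x -> Q0 SX x = [set - normalize x]) /\
  (fun n : nat => sup [set hausdorff (Qset SX x (n.+1%:R^-1)) (Q0 SX x) | x in Xout alpha])
           @ \oo --> (0 : R).
Proof.
move=> a0 Hm; split; first by move=> x; apply: Q0eq.
apply/seq0P => e e0.
have [N hN] := KKn a0 Hm e0.
exists N => n hn.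
suff /andP[s0 s1] : 0 <= sup [set hausdorff (Qset SX x (n.+1%:R^-1)) (Q0 SX x)
   | x in Xout alpha] <= e by rewrite ger0_norm.
apply: sup_bnd; first exact: ltW.
move=> r [x xa <-]; rewrite (Q0eq a0 Hm xa).
have x0 := xa_neq0 a0 xa.
have uA : Qset SX x n.+1%:R^-1 (- normalize x) by apply: In_Q.
have /andP[-> _] := haus_bnd (@Qsub _ _ x n.+1%:R^-1) uA.
rewrite /=; apply: ge_inf; first by exists 0 => r' [r0 _]; apply: ltW.
split=> //; split.
  move=> y hy; apply: enl1 => //; rewrite opprK; exact: hN n hn x y xa hy.
move=> y ->; exists (- normalize x) => //; exists 0; first by rewrite /unit_ball /= normr0.
by rewrite scaler0 addr0.
Qed.

Lemma L15 (alpha : R) : 0 < alpha -> @URmod R X -> USUR SX (Xout alpha).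
Proof.
move=> a0 Hm; split.
  by move=> x xa; exists (- normalize x); exact: Q0eq a0 Hm xa.
move=> e e0; have [d d0 hd] := KK a0 Hm e0.
exists d => // x xa y hy; rewrite (Q0eq a0 Hm xa).
by apply: enl1 => //; rewrite opprK; apply: hd xa hy.
Qed.

End Fwd.

Section Bwd.
Variables (R : realType) (X : normedModType R).
Local Notation SX := (@unit_sphere R X).

Lemma nS (alpha : R) (x : X) : 0 < alpha -> Xout alpha x -> SX (normalize x).
Proof. by move=> a0 xa; rewrite /unit_sphere /= norm_normalize // (xa_neq0 a0 xa). Qed.

Lemma absdiff4 (p q : R) : 0 <= p <= 2 -> 0 <= q <= 2 -> `|p - q| <= 4.
Proof. by move=> /andP[? ?] /andP[? ?]; rewrite ler_norml; apply/andP; split; lra. Qed.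

Lemma B2 (alpha : R) : 0 < alpha ->
 (fun n : nat => sup [set r | exists x x', [/\ Xout alpha x, Xout alpha x' &
     r = `| rad2 (Qset SX x (n.+1%:R^-1)) (Qset SX x' (n.+1%:R^-1))
            - `|normalize x - normalize x'| | ]]) @ \oo --> (0 : R) -> @URmod R X.
Proof.
move=> a0 /seq0P h e e0; have [N hN] := h e e0; have hs := hN N (leqnn N).
have d0 : 0 < N.+1%:R^-1 :> R by rewrite invr_gt0.
exists (N.+1%:R^-1 / (alpha + 1)); first by rewrite divr_gt0 //; lra.
move=> u v Su Sv huv.
have [xa nx Qv Qu] := keyB a0 Su Sv (ltW d0) huv.
apply: le_trans hs; apply: le_trans (ler_norm _).
set A := Qset SX ((alpha + 1) *: u) N.+1%:R^-1 in Qv Qu *.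
have lo : `|u - v| <= rad2 A A.
  apply: (@sup_ge _ _ _ 2); first by exists (-v), (-u); rewrite negdist.
  by move=> r' [a [b [Aa Bb ->]]]; apply: dist_S; [exact: Qsub Aa | exact: Qsub Bb].
apply: (le_trans lo); apply: (@sup_ge _ _ _ 4).
  exists ((alpha + 1) *: u), ((alpha + 1) *: u); split => //.
  have /andP[r0 _] := rad2_bnd (@Qsub _ _ ((alpha + 1) *: u) N.+1%:R^-1)
                               (@Qsub _ _ ((alpha + 1) *: u) N.+1%:R^-1).
  by rewrite subrr normr0 subr0 ger0_norm.
move=> r' [x1 [x2 [xa1 xa2 ->]]]; apply: absdiff4.
  exact: rad2_bnd (@Qsub _ _ _ _) (@Qsub _ _ _ _).
by rewrite normr_ge0 dist_S //; apply: nS a0 _.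
Qed.

Lemma B3 (alpha : R) : 0 < alpha ->
  (fun n : nat => sup [set diamX (Qset SX x (n.+1%:R^-1)) | x in Xout alpha])
           @ \oo --> (0 : R) -> @URmod R X.
Proof.
move=> a0 /seq0P h e e0; have [N hN] := h e e0; have hs := hN N (leqnn N).
have d0 : 0 < N.+1%:R^-1 :> R by rewrite invr_gt0.
exists (N.+1%:R^-1 / (alpha + 1)); first by rewrite divr_gt0 //; lra.
move=> u v Su Sv huv.
have [xa nx Qv Qu] := keyB a0 Su Sv (ltW d0) huv.
apply: le_trans hs; apply: le_trans (ler_norm _).
have lo : `|u - v| <= diamX (Qset SX ((alpha + 1) *: u) N.+1%:R^-1).
  apply: (@sup_ge _ _ _ 2); first by exists (-v), (-u); rewrite negdist.
  by move=> r' [a [b [Aa Bb ->]]]; apply: dist_S; [exact: Qsub Aa | exact: Qsub Bb].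
apply: (le_trans lo); apply: (@sup_ge _ _ _ 2); first by exists ((alpha + 1) *: u).
by move=> r' [x1 xa1 <-]; have /andP[] := diam_bnd (@Qsub _ _ x1 N.+1%:R^-1).
Qed.

Lemma B4 (alpha : R) : 0 < alpha ->
  (forall x, Xout alpha x -> Q0 SX x = [set - normalize x]) /\
  (fun n : nat => sup [set hausdorff (Qset SX x (n.+1%:R^-1)) (Q0 SX x) | x in Xout alpha])
           @ \oo --> (0 : R) -> @URmod R X.
Proof.
move=> a0 [hQ /seq0P h] e e0; have [N hN] := h e e0; have hs := hN N (leqnn N).
have d0 : 0 < N.+1%:R^-1 :> R by rewrite invr_gt0.
exists (N.+1%:R^-1 / (alpha + 1)); first by rewrite divr_gt0 //; lra.
move=> u v Su Sv huv.
have [xa nx Qv Qu] := keyB a0 Su Sv (ltW d0) huv.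
apply: le_trans hs; apply: le_trans (ler_norm _).
set x := (alpha + 1) *: u in xa nx Qv Qu *.
apply: (@le_trans _ _ (hausdorff (Qset SX x N.+1%:R^-1) (Q0 SX x))).
  rewrite hQ // nx; apply: lb_le_inf.
    by exists 2; apply: haus_in2 => //; apply: Qsub.
  move=> r [r0 [hA _]]; have := enl_inv (ltW r0) (hA _ Qv); by rewrite negdist.
apply: (@sup_ge _ _ _ 2); first by exists x.
move=> r' [x1 xa1 <-]; rewrite hQ //.
have /andP[] // := haus_bnd (@Qsub _ _ x1 N.+1%:R^-1) (In_Q (xa_neq0 a0 xa1) (ltW d0)).
Qed.

Lemma B5 (alpha : R) : 0 < alpha -> USUR SX (Xout alpha) -> @URmod R X.
Proof.
move=> a0 [hQ hU] e e0.
have [d d0 hd] := hU (e / 2) (divr_gt0 e0 (ltr0Sn _ 1)).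
exists (d / (alpha + 1)); first by rewrite divr_gt0 //; lra.
move=> u v Su Sv huv.
have [xa nx Qv Qu] := keyB a0 Su Sv (ltW d0) huv.
have [y0 hy0] := hQ _ xa.
have := hd _ xa _ Qu; have := hd _ xa _ Qv; rewrite hy0.
have e2 : 0 <= e / 2 by rewrite divr_ge0 // ltW.
move=> /(enl_inv e2) h1 /(enl_inv e2) h2.
rewrite -negdist; apply: le_trans (ler_distD y0 _ _) _.
rewrite (distrC y0); lra.
Qed.

End Bwd.


(* 1/n for n >= 1 is written (n.+1)%:R^-1, n : nat >= 0 *)
Theorem theorem3p9 (R : realType) (X : completeNormedModType R) (alpha : R) :
  0 < alpha ->
  let S := @unit_sphere R X in
  let Xa := @Xout R X alpha in
  [<-> @UR R X;
       (fun n : nat => sup [set r | exists x x', [/\ Xa x, Xa x' &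
           r = `| rad2 (Qset S x (n.+1%:R^-1)) (Qset S x' (n.+1%:R^-1))
                  - `|normalize x - normalize x'| | ]]) @ \oo --> (0 : R);
       (fun n : nat => sup [set diamX (Qset S x (n.+1%:R^-1)) | x in Xa])
           @ \oo --> (0 : R);
       (forall x, Xa x -> Q0 S x = [set - normalize x]) /\
       (fun n : nat => sup [set hausdorff (Qset S x (n.+1%:R^-1)) (Q0 S x) | x in Xa])
           @ \oo --> (0 : R);
       USUR S Xa].
Proof.
move=> a0 S Xa; rewrite /S /Xa.
tfae.
- by move=> /UR_URmod Hm; exact: L12 a0 Hm.
- by move=> /(B2 a0) Hm; exact: L13 a0 Hm.
- by move=> /(B3 a0) Hm; exact: L14 a0 Hm.
- by move=> /(B4 a0) Hm; exact: L15 a0 Hm.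
- by move=> /(B5 a0); exact: URmod_UR.
Qed.
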